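(* Let $m$ be a positive integer and for $n\ge0$ let \[ G_n^{(m)}(q)=\sum_{0\leq k_m\leq\dots\leq k_1\leq n}q^{-2k_m}q^{\sum_{j=1}^m(k_j^2+2k_j)} \frac{(q)_n^2}{(q)_{k_m}^2(q)_{n-k_1}\prod_{j=1}^{m-1}(q)_{k_j-k_{j+1}}} \cdot\frac{(1-q^{n+1})(1-q^{n+2})}{(1-q^{n-k_m+1})(1-q^{n-k_m+2})}\in\mathbb{Z}[[q]]. \] Then for every $n\ge 0$, \[ G_n^{(m)}(q)\equiv(q)_{\infty}\sum_{0\leq k_m\leq\dots\leq k_2\leq k_1}\frac{q^{-2k_m}q^{\sum_{j=1}^m(k_j^2+2k_j)}}{(q)_{k_m}^2(q)_{k_1-k_2}\cdots(q)_{k_{m-1}-k_m}}\pmod{q^{n+1}\mathbb{Z}[[q]]}. \]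
   Context: $(q)_k=\prod_{l=1}^{k}(1-q^l)$ for $k\ge0$, $(q)_0=1$, $(q)_\infty=\prod_{l\ge1}(1-q^l)$; rational functions are expanded as power series in $q$; empty products equal $1$. *)

(* Defs.v *)
(* Formal power series over Z are modelled as coefficient
   functions nat -> int, with the Cauchy product. *)
From HB Require Import structures.
From mathcomp Require Import all_boot all_order all_algebra.
Set Implicit Arguments. Unset Strict Implicit. Unset Printing Implicit Defensive.
Import Order.TTheory GRing.Theory Num.Theory.
Local Open Scope ring_scope.

Definition ps := nat -> int.
Definition ps_zero : ps := fun _ => 0.
Definition ps_one : ps := fun d => if d == 0%N then 1 else 0.
Definition ps_add (f g : ps) : ps := fun d => f d + g d.
Definition ps_mul (f g : ps) : ps := fun d => \sum_(i < d.+1) f i * g (d - i)%N.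
Definition ps_mon (e : nat) : ps := fun d => if d == e then 1 else 0.
Definition ps_of_poly (p : {poly int}) : ps := fun d => p`_d.
(* the expansion of 1/(1 - q^l) (used only for l >= 1) *)
Definition ps_geom (l : nat) : ps := fun d => if (l %| d)%N then 1 else 0.

Definition qpoch (k : nat) : {poly int} := \prod_(1 <= l < k.+1) (1 - 'X^l).
Definition qpoch_inv (k : nat) : ps := \big[ps_mul/ps_one]_(1 <= l < k.+1) ps_geom l.

(* q-adic (coefficientwise eventually constant) limit *)
Definition ps_lim (F : nat -> ps) (S : ps) : Prop :=
  forall d, exists N, forall M, (N <= M)%N -> F M d = S d.
(* f = g mod q^{n+1} Z[[q]] *)
Definition ps_congr (n : nat) (f g : ps) : Prop :=
  forall d, (d <= n)%N -> f d = g d.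

(* tuples (k_1,...,k_m) are stored 0-based: k j = k_{j+1}, j < m *)
Definition kfun (m B : nat) (k : {ffun 'I_m -> 'I_B}) (j : nat) : nat :=
  if (insub j : option 'I_m) is Some i then val (k i) else 0%N.
Definition mono (m B : nat) (k : {ffun 'I_m -> 'I_B}) : bool :=
  [forall i : 'I_m, forall j : 'I_m, (i <= j)%N ==> (k j <= k i)%N].

(* exponent -2 k_m + sum_j (k_j^2 + 2 k_j)  (always >= 0) *)
Definition expo (m : nat) (k : nat -> nat) : nat :=
  ((\sum_(j < m) (k j ^ 2 + 2 * k j)) - 2 * k m.-1)%N.

Definition Gterm (m n : nat) (k : nat -> nat) : ps :=
  ps_mul (ps_mon (expo m k))
  (ps_mul (ps_of_poly (qpoch n ^+ 2 * (1 - 'X^(n.+1)) * (1 - 'X^(n.+2))))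
  (ps_mul (ps_mul (qpoch_inv (k m.-1)) (qpoch_inv (k m.-1)))
  (ps_mul (qpoch_inv (n - k 0%N)%N)
  (ps_mul (\big[ps_mul/ps_one]_(j < m.-1) qpoch_inv (k j - k j.+1)%N)
          (ps_mul (ps_geom (n - k m.-1).+1) (ps_geom (n - k m.-1).+2)))))).

Definition Gn (m n : nat) : ps :=
  \big[ps_add/ps_zero]_(k : {ffun 'I_m -> 'I_n.+1} | mono k) Gterm m n (kfun k).

Definition Rterm (m : nat) (k : nat -> nat) : ps :=
  ps_mul (ps_mon (expo m k))
  (ps_mul (ps_mul (qpoch_inv (k m.-1)) (qpoch_inv (k m.-1)))
          (\big[ps_mul/ps_one]_(j < m.-1) qpoch_inv (k j - k j.+1)%N)).

Definition Rpartial (m N : nat) : ps :=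
  \big[ps_add/ps_zero]_(k : {ffun 'I_m -> 'I_N.+1} | mono k) Rterm m (kfun k).

(* Main.v *)
Require Import Defs.
From HB Require Import structures.
From mathcomp Require Import all_boot all_order all_algebra.
From mathcomp Require Import zify.
From Stdlib Require Import FunctionalExtensionality.
Set Implicit Arguments. Unset Strict Implicit. Unset Printing Implicit Defensive.
Import Order.TTheory GRing.Theory Num.Theory.
Local Open Scope ring_scope.

Lemma ps_ext (f g : ps) : (forall d, f d = g d) -> f = g.
Proof. by move=> H; apply: functional_extensionality. Qed.

Definition tp (N : nat) (f : ps) : {poly int} := \poly_(i < N) f i.

Lemma mulE (f g : ps) N d : (d < N)%N -> ps_mul f g d = (tp N f * tp N g)`_d.
Proof.
move=> hd; rewrite coefM /ps_mul; apply: eq_bigr => i _.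
rewrite /tp !coef_poly; have hi := ltn_ord i.
rewrite (leq_ltn_trans _ hd) ?(leq_ltn_trans (leq_subr _ _) hd) //.
Qed.

Lemma agreeL (p p' q : {poly int}) d :
  (forall j, (j <= d)%N -> p`_j = p'`_j) -> (p * q)`_d = (p' * q)`_d.
Proof.
move=> H; rewrite !coefM; apply: eq_bigr => i _; rewrite H //.
by rewrite -ltnS.
Qed.

Lemma mulC (f g : ps) : ps_mul f g = ps_mul g f.
Proof. by apply: ps_ext => d; rewrite !(@mulE _ _ d.+1) // mulrC. Qed.

Lemma mulA (f g h : ps) : ps_mul f (ps_mul g h) = ps_mul (ps_mul f g) h.
Proof.
apply: ps_ext => d; rewrite !(@mulE _ _ d.+1) //.
rewrite [RHS](@agreeL _ (tp d.+1 f * tp d.+1 g)); last first.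
  by move=> j hj; rewrite [in LHS]/tp coef_poly ltnS hj (@mulE _ _ d.+1).
rewrite [_ * tp d.+1 (ps_mul g h)]mulrC.
rewrite [LHS](@agreeL _ (tp d.+1 g * tp d.+1 h)); last first.
  by move=> j hj; rewrite [in LHS]/tp coef_poly ltnS hj (@mulE _ _ d.+1).
by rewrite [_ * tp d.+1 f]mulrC mulrA.
Qed.

Lemma sum_delta d (l : nat) (F : nat -> int) :
  \sum_(i < d.+1) ((nat_of_ord i == l)%:R * F i) = if (l <= d)%N then F l else 0.
Proof.
case: ifP => hl.
  rewrite (bigD1 (Ordinal (n:=d.+1) (m:=l) hl)) //= eqxx mul1r big1 ?addr0 //.
  move=> i hi; suff -> : (i == l :> nat) = false by rewrite mul0r.
  by apply/negbTE; apply: contra hi => /eqP hi; apply/eqP/val_inj.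
rewrite big1 // => i _; suff -> : (i == l :> nat) = false by rewrite mul0r.
apply/negbTE; apply/eqP => hi; have := ltn_ord i; rewrite hi ltnS hl //.
Qed.

Lemma monE (e : nat) (f : ps) d :
  ps_mul (ps_mon e) f d = if (e <= d)%N then f (d - e)%N else 0.
Proof.
rewrite /ps_mul /ps_mon.
rewrite (eq_bigr (fun i : 'I_d.+1 => ((i == e :> nat)%:R * f (d - i)%N))); last first.
  by move=> i _; case: (i == e :> nat).
by rewrite (sum_delta d e (fun i => f (d - i)%N)).
Qed.

Lemma mul1 (f : ps) : ps_mul ps_one f = f.
Proof.
apply: ps_ext => d; have -> : ps_one = ps_mon 0 by [].
by rewrite monE subn0.
Qed.

HB.instance Definition _ := Monoid.isComLaw.Build ps ps_one ps_mul mulA mulC mul1.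

Lemma mul1r' (f : ps) : ps_mul f ps_one = f.
Proof. by rewrite mulC mul1. Qed.

Lemma mulCA (f g h : ps) : ps_mul f (ps_mul g h) = ps_mul g (ps_mul f h).
Proof. by rewrite mulA (mulC f) -mulA. Qed.

Lemma polyM (p q : {poly int}) : ps_of_poly (p * q) = ps_mul (ps_of_poly p) (ps_of_poly q).
Proof. by apply: ps_ext => d; rewrite /ps_of_poly coefM. Qed.

Lemma poly1 : ps_of_poly 1 = ps_one.
Proof. by apply: ps_ext => d; rewrite /ps_of_poly coef1 /ps_one; case: (d == 0%N). Qed.

Lemma polyPM (I : Type) (r : seq I) (P : pred I) (F : I -> {poly int}) :
  ps_of_poly (\prod_(i <- r | P i) F i) = \big[ps_mul/ps_one]_(i <- r | P i) ps_of_poly (F i).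
Proof. by apply: (big_morph ps_of_poly polyM poly1). Qed.

Lemma cg_mul d f f' g g' : ps_congr d f f' -> ps_congr d g g' ->
  ps_congr d (ps_mul f g) (ps_mul f' g').
Proof.
move=> hf hg i hi; rewrite /ps_mul; apply: eq_bigr => j _.
have hj : (j <= i)%N by rewrite -ltnS.
rewrite hf ?hg //; [exact: leq_trans (leq_subr _ _) hi | exact: leq_trans hj hi].
Qed.

Lemma cg_refl d f : ps_congr d f f. Proof. by []. Qed.
Lemma cg_sym d f g : ps_congr d f g -> ps_congr d g f.
Proof. by move=> H i hi; rewrite H. Qed.
Lemma cg_trans d f g h : ps_congr d f g -> ps_congr d g h -> ps_congr d f h.
Proof. by move=> H1 H2 i hi; rewrite H1 ?H2. Qed.
Lemma cg_le d d' f g : (d' <= d)%N -> ps_congr d f g -> ps_congr d' f g.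
Proof. by move=> hd H i hi; rewrite H // (leq_trans hi hd). Qed.

Lemma oneminus l : ps_of_poly (1 - 'X^l) = fun i => ps_one i - ps_mon l i.
Proof.
apply: ps_ext => i; rewrite /ps_of_poly coefB coef1 coefXn /ps_one /ps_mon.
by case: (i == 0%N); case: (i == l).
Qed.

Lemma cg_oneminus d l : (d < l)%N -> ps_congr d (ps_of_poly (1 - 'X^l)) ps_one.
Proof.
move=> hl i hi; rewrite oneminus /ps_mon.
have -> : (i == l) = false by apply/negbTE; apply/eqP => e; move: hi; rewrite e leqNgt hl.
by rewrite subr0.
Qed.

Lemma geom_inv l : (0 < l)%N -> ps_mul (ps_of_poly (1 - 'X^l)) (ps_geom l) = ps_one.
Proof.
move=> hl; apply: ps_ext => d; rewrite oneminus.
have -> : ps_mul (fun i => ps_one i - ps_mon l i) (ps_geom l) d =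
   ps_mul ps_one (ps_geom l) d - ps_mul (ps_mon l) (ps_geom l) d.
  by rewrite /ps_mul -sumrB; apply: eq_bigr => i _; rewrite mulrBl.
rewrite mul1 monE /ps_geom /ps_one.
case: d => [|d]; first by rewrite dvdn0 leqn0 (gtn_eqF hl) subr0.
rewrite /=; case hle: (l <= d.+1)%N.
  by rewrite dvdn_subl ?dvdnn //; case: (l %| d.+1)%N; rewrite ?subrr.
have -> : (l %| d.+1)%N = false.
  by apply/negbTE; apply/negP => /dvdn_leq H; rewrite H in hle.
by rewrite subrr.
Qed.

Lemma qpoch_inv_r k : ps_mul (ps_of_poly (qpoch k)) (qpoch_inv k) = ps_one.
Proof.
rewrite /qpoch /qpoch_inv polyPM -big_split /= big_nat_cond.
by apply: big1 => l /andP[/andP[h1 _] _]; apply: geom_inv.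
Qed.

Lemma qpoch_cg d N M : (d <= N)%N -> (N <= M)%N ->
  ps_congr d (ps_of_poly (qpoch M)) (ps_of_poly (qpoch N)).
Proof.
move=> hdN hNM; rewrite /qpoch (@big_cat_nat _ _ _ N.+1) // polyM.
rewrite -[X in ps_congr _ _ X]mul1r'; apply: cg_mul => //.
rewrite polyPM big_nat_cond.
apply: (big_ind (fun f => ps_congr d f ps_one)) => //.
  by move=> x y hx hy; rewrite -(mul1 ps_one); apply: cg_mul.
move=> l /andP[/andP[h1 _] _]; apply: cg_oneminus.
exact: leq_ltn_trans hdN h1.
Qed.

Definition Qinf0 : ps := fun d => ps_of_poly (qpoch d) d.

Lemma Qinf_lim : ps_lim (fun N => ps_of_poly (qpoch N)) Qinf0.
Proof. by move=> d; exists d => M hM; rewrite (@qpoch_cg d d M). Qed.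

Lemma Qinf_cg N : ps_congr N (ps_of_poly (qpoch N)) Qinf0.
Proof. by move=> i hi; rewrite /Qinf0 (@qpoch_cg i i N). Qed.

Lemma cg_geom d l : (d < l)%N -> ps_congr d (ps_geom l) ps_one.
Proof.
move=> hl i hi; rewrite /ps_geom /ps_one; case: i hi => [|i] hi; first by rewrite dvdn0.
have -> : (l %| i.+1)%N = false.
  by apply/negbTE/negP => /dvdn_leq H; have := H isT; lia.
by [].
Qed.

Lemma expo_ge m k : (0 < m)%N -> (k 0%N ^ 2 <= expo m k)%N.
Proof.
rewrite /expo; case: m => [|[|m]] // _.
  by rewrite big_ord1 /=; lia.
rewrite big_ord_recl big_ord_recr /=.
set s := \sum_(i < m) _.
have -> : bump 0 (@ord_max m) = m.+1 by rewrite /bump /=; lia.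
lia.
Qed.

Lemma kfun_ord m B (k : {ffun 'I_m -> 'I_B}) (i : 'I_m) : kfun k i = k i.
Proof. by rewrite /kfun valK. Qed.

Lemma kfun_props m B (k : {ffun 'I_m -> 'I_B.+1}) (hm : (0 < m)%N) :
  mono k -> (kfun k m.-1 <= kfun k 0 <= B)%N.
Proof.
move=> /forallP hmono.
have hm1 : (m.-1 < m)%N by case: m hm {k hmono}.
have -> : kfun k 0 = k (Ordinal hm) := kfun_ord k (Ordinal hm).
have -> : kfun k m.-1 = k (Ordinal hm1) := kfun_ord k (Ordinal hm1).
have := hmono (Ordinal hm) => /forallP /(_ (Ordinal hm1)) /implyP /(_ isT) ->.
by rewrite -ltnS ltn_ord.
Qed.

Lemma sum_eval (T : finType) (P : pred T) (F : T -> ps) d :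
  (\big[ps_add/ps_zero]_(k | P k) F k) d = \sum_(k | P k) F k d.
Proof. by apply: (big_morph (fun f : ps => f d)). Qed.

Lemma mul_sum (f : ps) (T : finType) (P : pred T) (F : T -> ps) d :
  ps_mul f (\big[ps_add/ps_zero]_(k | P k) F k) d = \sum_(k | P k) ps_mul f (F k) d.
Proof.
rewrite /ps_mul [RHS]exchange_big /=; apply: eq_bigr => i _.
by rewrite sum_eval mulr_sumr.
Qed.

Lemma term_cg m n (k : nat -> nat) d : (0 < m)%N -> (k m.-1 <= k 0%N <= n)%N ->
  (d <= n)%N -> Gterm m n k d = ps_mul Qinf0 (Rterm m k) d.
Proof.
move=> hm /andP[hkm hk0] hd.
rewrite /Gterm /Rterm.
set e := expo m k.
set I2 := ps_mul (qpoch_inv _) _.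
set Pr := \big[ps_mul/ps_one]_(j < m.-1) _.
set G2 := ps_mul (ps_geom _) (ps_geom _).
set Inv1 := qpoch_inv _.
set Pn := ps_of_poly _.
rewrite (mulCA Qinf0) !monE; case: ifP => he //.
rewrite (mulCA I2) mulA (mulA I2).
set c := (n - k 0%N)%N.
have hc : (c <= n)%N by rewrite leq_subr.
have hG2 : ps_congr c G2 ps_one.
  rewrite -(mul1 ps_one); apply: cg_mul; apply: cg_geom; rewrite /c; lia.
have hPn : ps_congr c (ps_mul Pn Inv1) Qinf0.
  rewrite /Pn expr2 !polyM.
  have H : ps_congr c
    (ps_mul (ps_mul (ps_mul (ps_mul (ps_of_poly (qpoch n)) (ps_of_poly (qpoch n)))
       (ps_of_poly (1 - 'X^(n.+1)))) (ps_of_poly (1 - 'X^(n.+2)))) Inv1)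
    (ps_mul (ps_mul (ps_mul (ps_mul Qinf0 (ps_of_poly (qpoch c))) ps_one) ps_one) Inv1).
    apply: cg_mul => //; apply: cg_mul; last by apply: cg_oneminus; lia.
    apply: cg_mul; last by apply: cg_oneminus; lia.
    apply: cg_mul; first by move=> i hi; apply: (@Qinf_cg n); apply: leq_trans hi hc.
    exact: qpoch_cg.
  by rewrite !mul1r' -(mulA Qinf0) /Inv1 /c qpoch_inv_r mul1r' in H.
have key := cg_mul hPn (cg_mul (@cg_refl c (ps_mul I2 Pr)) hG2).
rewrite mul1r' in key; apply: key.
have := expo_ge k hm; rewrite -/e => hek.
have : (k 0%N <= k 0%N ^ 2)%N by case: (k 0%N) => // x; rewrite -mulnn leq_pmulr.
rewrite /c; lia.
Qed.

Lemma Rpartial_step m j N : (0 < m)%N -> (j <= N)%N -> Rpartial m N.+1 j = Rpartial m N j.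
Proof.
move=> hm hj; rewrite /Rpartial !sum_eval.
rewrite (bigID (fun k : {ffun 'I_m -> 'I_N.+2} => [forall i, (k i <= N)%N])) /=.
rewrite [X in _ + X]big1 ?addr0; last first.
  move=> k /andP[hmono /forallPn [i hi]].
  rewrite /Rterm monE ifF //; apply/negbTE; rewrite -ltnNge.
  have := kfun_props hm hmono => /andP[_ _].
  have hm0 : (kfun k 0 >= k i)%N.
    have -> : kfun k 0 = k (Ordinal hm) := kfun_ord k (Ordinal hm).
    by move: hmono => /forallP /(_ (Ordinal hm)) /forallP /(_ i) /implyP ->.
  have := expo_ge (kfun k) hm.
  have : (kfun k 0 <= kfun k 0 ^ 2)%N by case: (kfun k 0) => // x; rewrite -mulnn leq_pmulr.
  lia.
pose h := fun k : {ffun 'I_m -> 'I_N.+1} =>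
  [ffun i => widen_ord (leqnSn N.+1) (k i)] : {ffun 'I_m -> 'I_N.+2}.
pose h' := fun k : {ffun 'I_m -> 'I_N.+2} =>
  [ffun i => inord (k i)] : {ffun 'I_m -> 'I_N.+1}.
rewrite (reindex_onto h h'); last first.
  move=> k /andP[_ /forallP hk]; apply/ffunP => i; rewrite !ffunE.
  by apply: val_inj; rewrite /= inordK // ltnS.
have hkf : forall k, kfun (h k) = kfun k.
  move=> k; apply: functional_extensionality => x; rewrite /kfun.
  by case: insub => // i; rewrite ffunE.
apply: eq_big => [k|k _]; last by rewrite hkf.
have -> : mono (h k) = mono k.
  by rewrite /mono; apply: eq_forallb => i; apply: eq_forallb => i'; rewrite !ffunE.
have -> : [forall i, (h k i <= N)%N].
  by apply/forallP => i; rewrite ffunE /= -ltnS ltn_ord.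
have -> : h' (h k) == k.
  by apply/eqP/ffunP => i; rewrite !ffunE; apply: val_inj; rewrite /= inordK.
by rewrite !andbT.
Qed.

Lemma Rpartial_stable m j N : (0 < m)%N -> (j <= N)%N -> Rpartial m N j = Rpartial m j j.
Proof.
move=> hm /subnKC <-; elim: (N - j)%N => [|t IH]; first by rewrite addn0.
by rewrite addnS Rpartial_step // leq_addr.
Qed.

Theorem mainTheorem4 (m n : nat) (hm : (0 < m)%N) :
  exists (Qinf S : ps),
    ps_lim (fun N => ps_of_poly (qpoch N)) Qinf /\
    ps_lim (Rpartial m) S /\
    ps_congr n (Gn m n) (ps_mul Qinf S).
Proof.
exists Qinf0, (fun d => Rpartial m d d); split; first exact: Qinf_lim.
split.
  by move=> d; exists d => M hM; rewrite Rpartial_stable.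
move=> d hd.
have hS : ps_congr n (Rpartial m n) (fun d => Rpartial m d d).
  by move=> i hi; rewrite Rpartial_stable.
rewrite -(cg_mul (@cg_refl n Qinf0) hS hd) /Rpartial mul_sum /Gn sum_eval.
apply: eq_bigr => k hk; apply: term_cg => //.
exact: kfun_props.
Qed.
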